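(* Let $A\to B$ be a map of $\mathbb{Z}$-graded unital rings, where $A$ is concentrated in grade $0$. Suppose $A\to B$ is separable, i.e. the multiplication map $\mu:B\otimes_A B^{op}\to B$, viewed as a map of $B$-bimodules, admits a $B$-bimodule section $\sigma:B\to B\otimes_A B^{op}$. Suppose moreover that $B$ has no zero divisors in the subring $B_0$ (no nonzero element of $B_0$ is a zero divisor in $B$). Then $B$ is concentrated in grade $0$.
   Context: Rings are unital and ring maps unital; gradings are $\mathbb{Z}$-gradings, $B_n$ denotes the degree-$n$ part of $B$. *)

(* Defs.v *)
From HB Require Import structures.
From mathcomp Require Import all_boot all_order all_algebra.
Set Implicit Arguments. Unset Strict Implicit. Unset Printing Implicit Defensive.
Import Order.TTheory GRing.Theory Num.Theory.
Local Open Scope ring_scope.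

Definition is_Zgrading (R : pzRingType) (G : int -> R -> Prop) : Prop :=
  [/\ (forall n, G n 0 /\ forall x y, G n x -> G n y -> G n (x - y)),
      G 0 1,
      (forall m n x y, G m x -> G n y -> G (m + n) (x * y)),
      (forall b, exists (s : seq int) (x : int -> R),
          (forall n, G n (x n)) /\ b = \sum_(n <- s) x n) &
      (forall (s : seq int) (x : int -> R), uniq s ->
          (forall n, G n (x n)) -> \sum_(n <- s) x n = 0 ->
          forall n, n \in s -> x n = 0)].

Definition concentrated0 (R : pzRingType) (G : int -> R -> Prop) : Prop :=
  forall n x, n != 0 -> G n x -> x = 0.

(* The tensor product B (x)_A B (B a right A-module and a left A-module via
   f : A -> B) presented as formal finite sums  sum_i x_i (x) y_i  (lists of
   pairs, concatenation = addition) modulo the congruence generated by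
   biadditivity and A-balancedness. *)
Inductive tens_rel (A B : pzRingType) (f : A -> B) :
    seq (B * B) -> seq (B * B) -> Prop :=
| tr_refl s : tens_rel f s s
| tr_sym s t : tens_rel f s t -> tens_rel f t s
| tr_trans s t u : tens_rel f s t -> tens_rel f t u -> tens_rel f s u
| tr_cat s1 s2 t1 t2 : tens_rel f s1 t1 -> tens_rel f s2 t2 ->
    tens_rel f (s1 ++ s2) (t1 ++ t2)
| tr_perm s t : perm_eq s t -> tens_rel f s t
| tr_addl x x' y : tens_rel f [:: (x + x', y)] [:: (x, y); (x', y)]
| tr_addr x y y' : tens_rel f [:: (x, y + y')] [:: (x, y); (x, y')]
| tr_zero y : tens_rel f [:: (0, y)] [::]
| tr_bal x a y : tens_rel f [:: (x * f a, y)] [:: (x, f a * y)].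

Definition tens_act (B : pzRingType) (b c : B) (s : seq (B * B)) :=
  map (fun p => (b * p.1, p.2 * c)) s.

Definition tens_mu (B : pzRingType) (s : seq (B * B)) : B :=
  \sum_(p <- s) p.1 * p.2.

(* f : A -> B is separable: mu admits a B-bimodule section sigma
   (given by representatives; all identities hold in the quotient). *)
Definition separable (A B : pzRingType) (f : A -> B) : Prop :=
  exists sigma : B -> seq (B * B),
    [/\ (forall x y, tens_rel f (sigma (x + y)) (sigma x ++ sigma y)),
        (forall b c x, tens_rel f (sigma (b * x * c)) (tens_act b c (sigma x))) &
        (forall x, tens_mu (sigma x) = x)].

(* Main.v *)
Require Import Defs.
From HB Require Import structures.
From mathcomp Require Import all_boot all_order all_algebra.
From Stdlib Require Import ClassicalEpsilon.
Import GRing.Theory.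
Local Open Scope ring_scope.

Set Implicit Arguments. Unset Strict Implicit.

Lemma g0 (B : pzRingType) (G : int -> B -> Prop) n : is_Zgrading G -> G n 0.
Proof. by case=> H _ _ _ _; case: (H n). Qed.

Lemma gB (B : pzRingType) (G : int -> B -> Prop) n x y : is_Zgrading G ->
  G n x -> G n y -> G n (x - y).
Proof. by case=> H _ _ _ _; case: (H n) => _; apply. Qed.

Lemma gD (B : pzRingType) (G : int -> B -> Prop) n x y : is_Zgrading G ->
  G n x -> G n y -> G n (x + y).
Proof.
move=> HG hx hy; rewrite -[y]opprK; apply: gB => //.
rewrite -sub0r; apply: gB => //; exact: g0.
Qed.

Lemma gsum (B : pzRingType) (G : int -> B -> Prop) n (I : Type) (r : seq I)
  (F : I -> B) : is_Zgrading G -> (forall i, G n (F i)) -> G n (\sum_(i <- r) F i).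
Proof.
move=> HG HF; elim: r => [|i r IH]; first by rewrite big_nil; exact: g0.
by rewrite big_cons; apply: gD.
Qed.

Definition Dec (B : pzRingType) (G : int -> B -> Prop) (x : B) (s : seq int)
  (h : int -> B) :=
  [/\ uniq s, forall k, G k (h k), forall k, k \notin s -> h k = 0 &
      x = \sum_(k <- s) h k].

Lemma sum_sub (B : pzRingType) (s t : seq int) (h : int -> B) :
  uniq s -> uniq t -> {subset s <= t} -> (forall k, k \notin s -> h k = 0) ->
  \sum_(k <- t) h k = \sum_(k <- s) h k.
Proof.
move=> us ut st hz.
rewrite (bigID (fun k => k \in s)) /= [X in _ + X]big1 ?addr0; last first.
  by move=> k /hz.
rewrite -big_filter; apply: perm_big; apply: uniq_perm.
- exact: filter_uniq.
- done.
move=> k; rewrite mem_filter; case Hk: (k \in s) => //=; exact: st.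
Qed.

Lemma Dec_unique (B : pzRingType) (G : int -> B -> Prop) x s h s' h' :
  is_Zgrading G -> Dec G x s h -> Dec G x s' h' -> forall k, h k = h' k.
Proof.
move=> HG [us hG hz hx] [us' hG' hz' hx'] k.
set t := undup (s ++ s').
have ut : uniq t by exact: undup_uniq.
have e1 : \sum_(k <- t) h k = x.
  by rewrite hx; apply: sum_sub => // j js; rewrite mem_undup mem_cat js.
have e2 : \sum_(k <- t) h' k = x.
  by rewrite hx'; apply: sum_sub => // j js; rewrite mem_undup mem_cat js orbT.
have [_ _ _ _ Hdir] := HG.
have Hd := Hdir t (fun k => h k - h' k) ut.
case kt: (k \in t).
  apply/eqP; rewrite -subr_eq0; apply/eqP; apply: Hd => //.
    by move=> j; apply: gB.
  by rewrite sumrB e1 e2 subrr.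
move: kt; rewrite mem_undup mem_cat => /negbT; rewrite negb_or => /andP[k1 k2].
by rewrite hz // hz'.
Qed.

Lemma Dec_add (B : pzRingType) (G : int -> B -> Prop) x s h y s' h' :
  is_Zgrading G -> Dec G x s h -> Dec G y s' h' ->
  Dec G (x + y) (undup (s ++ s')) (fun k => h k + h' k).
Proof.
move=> HG [us hG hz hx] [us' hG' hz' hx']; split.
- exact: undup_uniq.
- by move=> k; apply: gD.
- move=> k; rewrite mem_undup mem_cat negb_or => /andP[k1 k2].
  by rewrite hz // hz' // addr0.
have uu := undup_uniq (s ++ s').
rewrite big_split /= hx hx'; congr (_ + _); symmetry; apply: sum_sub => //
  j js; rewrite mem_undup mem_cat js ?orbT //.
Qed.

Lemma Dec_hom (B : pzRingType) (G : int -> B -> Prop) m z :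
  is_Zgrading G -> G m z -> Dec G z [:: m] (fun k => if k == m then z else 0).
Proof.
move=> HG hz; split => //.
- move=> k; case E: (_ == _); last exact: g0.
  by move/eqP: E => ->.
- by move=> k; rewrite inE => /negbTE ->.
by rewrite big_seq1 eqxx.
Qed.

Lemma Dec_exists (B : pzRingType) (G : int -> B -> Prop) x :
  is_Zgrading G -> exists s h, Dec G x s h.
Proof.
move=> HG; have [_ _ _ Hdec _] := HG.
have [s0 [x0 [Hx0 ->]]] := Hdec x.
elim: s0 => [|n r [s [h IH]]].
  exists [::], (fun _ => 0); split => //.
    by move=> k; exact: g0.
  by rewrite !big_nil.
rewrite big_cons; eexists; eexists; apply: Dec_add => //; last exact: IH.
exact: Dec_hom.
Qed.

Definition comp (B : pzRingType) (G : int -> B -> Prop) (n : int) (x : B) : B :=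
  epsilon (inhabits 0) (fun y => exists s h, Dec G x s h /\ y = h n).

Lemma comp_Dec (B : pzRingType) (G : int -> B -> Prop) x s h n :
  is_Zgrading G -> Dec G x s h -> comp G n x = h n.
Proof.
move=> HG hd; rewrite /comp.
have := @epsilon_spec B (inhabits 0) (fun y => exists s h, Dec G x s h /\ y = h n).
case; first by exists (h n), s, h.
move=> s' [h' [hd' ->]]; symmetry; exact: (Dec_unique HG hd hd').
Qed.

Lemma comp_exists (B : pzRingType) (G : int -> B -> Prop) x :
  is_Zgrading G -> exists s, Dec G x s (fun k => comp G k x).
Proof.
move=> HG; have [s [h hd]] := Dec_exists x HG; exists s.
have E : forall k, comp G k x = h k by move=> k; exact: comp_Dec hd.
case: hd => us hG hz hx; split => //.
- by move=> k; rewrite E.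
- by move=> k ks; rewrite E hz.
by rewrite {1}hx; apply: eq_bigr => k _; rewrite E.
Qed.

Lemma compG (B : pzRingType) (G : int -> B -> Prop) n x :
  is_Zgrading G -> G n (comp G n x).
Proof. by move=> HG; have [s [_ ? _ _]] := comp_exists x HG. Qed.

Lemma compD (B : pzRingType) (G : int -> B -> Prop) n x y :
  is_Zgrading G -> comp G n (x + y) = comp G n x + comp G n y.
Proof.
move=> HG; have [s hs] := comp_exists x HG; have [s' hs'] := comp_exists y HG.
by rewrite (comp_Dec _ HG (Dec_add HG hs hs')).
Qed.

Lemma comp0 (B : pzRingType) (G : int -> B -> Prop) n :
  is_Zgrading G -> comp G n 0 = 0.
Proof.
move=> HG; have h := compD n 0 0 HG; rewrite addr0 in h.
by apply: (addrI (comp G n 0)); rewrite addr0 -h.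
Qed.

Lemma comp_hom (B : pzRingType) (G : int -> B -> Prop) m k z :
  is_Zgrading G -> G m z -> comp G k z = if k == m then z else 0.
Proof. by move=> HG hz; rewrite (comp_Dec _ HG (Dec_hom HG hz)). Qed.

Lemma comp_sum (B : pzRingType) (G : int -> B -> Prop) n (I : Type) (r : seq I)
  (F : I -> B) : is_Zgrading G ->
  comp G n (\sum_(i <- r) F i) = \sum_(i <- r) comp G n (F i).
Proof.
move=> HG; elim: r => [|i r IH]; first by rewrite !big_nil comp0.
by rewrite !big_cons compD // IH.
Qed.

Lemma compMl (B : pzRingType) (G : int -> B -> Prop) m n x y :
  is_Zgrading G -> G m x -> comp G (m + n) (x * y) = x * comp G n y.
Proof.
move=> HG hx; have [s [us hG hz hy]] := comp_exists y HG.
have [_ _ Hmul _ _] := HG.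
have D : Dec G (x * y) (map (fun k => m + k) s) (fun j => x * comp G (j - m) y).
  split.
  - by rewrite map_inj_uniq // => a b /addrI.
  - move=> j; have := Hmul m (j - m) _ _ hx (hG (j - m)).
    by rewrite addrC subrK.
  - move=> j jn; rewrite hz ?mulr0 //; apply: contra jn => H.
    by apply/mapP; exists (j - m) => //; rewrite addrC subrK.
  rewrite big_map {1}hy mulr_sumr; apply: eq_bigr => k _.
  by rewrite [m + k]addrC addrK.
by rewrite (comp_Dec _ HG D) [m + n]addrC addrK.
Qed.

Lemma compMr (B : pzRingType) (G : int -> B -> Prop) m n x y :
  is_Zgrading G -> G m y -> comp G (n + m) (x * y) = comp G n x * y.
Proof.
move=> HG hy; have [s [us hG hz hx]] := comp_exists x HG.
have [_ _ Hmul _ _] := HG.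
have D : Dec G (x * y) (map (fun k => k + m) s) (fun j => comp G (j - m) x * y).
  split.
  - by rewrite map_inj_uniq // => a b /addIr.
  - move=> j; have := Hmul (j - m) m _ _ (hG (j - m)) hy.
    by rewrite subrK.
  - move=> j jn; rewrite hz ?mul0r //; apply: contra jn => H.
    by apply/mapP; exists (j - m) => //; rewrite subrK.
  rewrite big_map {1}hx mulr_suml; apply: eq_bigr => k _.
  by rewrite addrK.
by rewrite (comp_Dec _ HG D) addrK.
Qed.

Lemma comp_supp (B : pzRingType) (G : int -> B -> Prop) x t :
  is_Zgrading G -> uniq t -> (forall k, k \notin t -> comp G k x = 0) ->
  x = \sum_(k <- t) comp G k x.
Proof.
move=> HG ut zt; have [s [us _ zs hx]] := comp_exists x HG.
set u := undup (s ++ t).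
have uu : uniq u by exact: undup_uniq.
rewrite -(@sum_sub _ t u) //; last by move=> j jt; rewrite mem_undup mem_cat jt orbT.
by rewrite (@sum_sub _ s u) // => j js; rewrite mem_undup mem_cat js.
Qed.

Definition psi (B : pzRingType) (G : int -> B -> Prop) p q (l : seq (B * B)) :=
  \sum_(pr <- l) comp G p pr.1 * comp G q pr.2.

Lemma psi_rel (A B : pzRingType) (G : int -> B -> Prop) (f : A -> B) p q l1 l2 :
  is_Zgrading G -> (forall a, G 0 (f a)) -> tens_rel f l1 l2 ->
  psi G p q l1 = psi G p q l2.
Proof.
move=> HG Hf; elim => {l1 l2} //.
- by move=> s t u _ -> _ ->.
- by move=> s1 s2 t1 t2 _ e1 _ e2; move: e1 e2; rewrite /psi !big_cat => -> ->.
- by move=> s t st; apply: perm_big.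
- by move=> x x2 y; rewrite /psi !big_cons !big_nil /= compD // mulrDl !addr0.
- by move=> x y y2; rewrite /psi !big_cons !big_nil /= compD // mulrDr !addr0.
- by move=> y; rewrite /psi !big_cons !big_nil /= comp0 // mul0r addr0.
move=> x a y; rewrite /psi !big_cons !big_nil /=.
have h1 := compMr p x HG (Hf a); rewrite addr0 in h1.
have h2 := compMl q y HG (Hf a); rewrite add0r in h2.
by rewrite h1 h2 mulrA.
Qed.

Lemma fG0 (A B : pzRingType) (GA : int -> A -> Prop) (GB : int -> B -> Prop)
  (f : {rmorphism A -> B}) :
  is_Zgrading GA -> is_Zgrading GB -> concentrated0 GA ->
  (forall n a, GA n a -> GB n (f a)) -> forall a, GB 0 (f a).
Proof.
move=> HA HB cA Hf a; have [_ _ _ Hdec _] := HA.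
have [s [x [Hx ->]]] := Hdec a.
rewrite rmorph_sum; apply: gsum => // n.
have [->|nz] := eqVneq n 0; first exact: Hf.
by rewrite (cA n (x n) nz (Hx n)) rmorph0; exact: g0.
Qed.

Lemma supp_list (B : pzRingType) (G : int -> B -> Prop) (l : seq (B * B)) :
  is_Zgrading G -> exists S, uniq S /\
    forall k, k \notin S -> forall pr, pr \in l -> comp G k pr.1 = 0.
Proof.
move=> HG; elim: l => [|pr l [S [uS HS]]]; first by exists [::].
have [s [us _ zs _]] := comp_exists pr.1 HG.
exists (undup (s ++ S)); split; first exact: undup_uniq.
move=> k; rewrite mem_undup mem_cat negb_or => /andP[k1 k2] pr'.
rewrite inE => /orP[/eqP ->|]; first exact: zs.
exact: HS.
Qed.

Lemma comp0_mul (B : pzRingType) (G : int -> B -> Prop) x y t :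
  is_Zgrading G -> uniq t -> (forall k, k \notin t -> comp G k x = 0) ->
  comp G 0 (x * y) = \sum_(k <- t) comp G k x * comp G (- k) y.
Proof.
move=> HG ut zt; rewrite {1}(comp_supp HG ut zt) mulr_suml comp_sum //.
apply: eq_bigr => k _.
have := compMl (- k) y HG (compG k x HG); rewrite addrN => ->.
done.
Qed.

Theorem theorem4p2 (A B : pzRingType) (GA : int -> A -> Prop)
    (GB : int -> B -> Prop) (f : {rmorphism A -> B}) :
  is_Zgrading GA -> is_Zgrading GB ->
  concentrated0 GA ->
  (forall n a, GA n a -> GB n (f a)) ->
  separable f ->
  (forall z, GB 0 z -> z != 0 ->
     forall y, (z * y = 0 -> y = 0) /\ (y * z = 0 -> y = 0)) ->
  concentrated0 GB.
Proof.
move=> HA HB cA Hf [sigma [Hadd Hact Hmu]] Hnzd d b dn0 hb.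
have Hf0 := fG0 HA HB cA Hf.
have [one0|one_n0] := eqVneq (1 : B) 0.
  by rewrite -[b]mulr1 one0 mulr0.
set e := sigma 1.
pose c p := psi GB p (- p) e.
have cG p : GB 0 (c p).
  apply: gsum => // pr; have := (HB : is_Zgrading GB).
  case=> _ _ Hmul _ _; have := Hmul p (- p) _ _ (compG p pr.1 HB) (compG (- p) pr.2 HB).
  by rewrite addrN.
have rel p : b * c p = c (p + d) * b.
  have r1 := Hact b 1 1; have r2 := Hact 1 b 1.
  rewrite !mulr1 in r1; rewrite !mul1r in r2.
  have e1 := psi_rel (p + d) (- p) HB Hf0 r1.
  have e2 := psi_rel (p + d) (- p) HB Hf0 r2.
  have E1 : psi GB (p + d) (- p) (tens_act b 1 e) = b * c p.
    rewrite /psi /tens_act big_map mulr_sumr; apply: eq_bigr => pr _ /=.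
    by rewrite mulr1 addrC compMl // mulrA.
  have E2 : psi GB (p + d) (- p) (tens_act 1 b e) = c (p + d) * b.
    rewrite /psi /tens_act big_map mulr_suml; apply: eq_bigr => pr _ /=.
    have := compMr (- (p + d)) pr.2 HB hb.
    rewrite opprD subrK => ->.
    by rewrite mul1r mulrA.
  by rewrite -E1 -E2 -e1 -e2.
have [S [uS HS]] := supp_list e HB.
have cS p : p \notin S -> c p = 0.
  move=> pS; rewrite /c /psi big1_seq // => pr /andP[_ prin].
  by rewrite (HS p pS pr prin) mul0r.
have sum1 : \sum_(k <- S) c k = 1.
  have [_ G01 _ _ _] := HB.
  have h1 := comp_hom 0 HB G01; rewrite eqxx in h1.
  rewrite -h1 -(Hmu 1) /tens_mu -/e comp_sum //.
  rewrite /c /psi exchange_big /= big_seq [RHS]big_seq.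
  apply: eq_bigr => pr prin; rewrite (comp0_mul _ HB uS) //.
  by move=> k kS; exact: HS.
case Hh: (has (fun p => (c p != 0) && (c (p + d) == 0)) S).
  move/hasP: Hh => [p _ /andP[cp0 /eqP cpd]].
  have := rel p; rewrite cpd mul0r; exact: (proj2 (Hnzd _ (cG p) cp0 b)).
exfalso.
have [p0 p0S cp0] : exists2 p0, p0 \in S & c p0 != 0.
  apply/hasP; apply: contraT => /hasPn H.
  move: sum1; rewrite big1_seq => [E|k /andP[_ kS]].
    by move: one_n0; rewrite -E eqxx.
  by have := H k kS; rewrite negbK => /eqP.
have step p : c p != 0 -> c (p + d) != 0.
  move=> cp; case pS: (p \in S); last by rewrite cS ?pS ?eqxx in cp.
  apply/negP => /eqP cpd; move/negbT: Hh => /hasPn /(_ p pS).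
  by rewrite cp cpd eqxx.
have chain n : c (p0 + n%:Z * d) != 0.
  elim: n => [|n IH]; first by rewrite mul0r addr0.
  have := step _ IH; rewrite intS mulrDl mul1r.
  by rewrite [d + _]addrC addrA.
have inS n : p0 + n%:Z * d \in S.
  by apply: contraT => nS; have := chain n; rewrite cS ?eqxx.
have := @uniq_leq_size _ (map (fun n : nat => p0 + n%:Z * d) (iota 0 (size S).+1)) S.
move=> H; suff: ((size S).+1 <= size S)%N by rewrite ltnn.
have := H _ _; rewrite size_map size_iota; apply.
  rewrite map_inj_uniq ?iota_uniq // => m n /addrI /(mulIf dn0).
  by case.
by move=> x /mapP[n _ ->]; exact: inS.
Qed.
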